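(* Let $\Sigma$ be a set and let $1\leq p<\infty$. Suppose $d$ is a separating quasi-metric on $\Sigma$ and $\gamma,\delta\in\Gamma_{\mathrm{CL}}(\Sigma)$ are composition-length gap penalties such that for all $a,b\in\Sigma$, \[\gamma(b)-\gamma(a)\leq d^p(a,b)\quad\text{and}\quad \delta(a)-\delta(b)\leq d^p(a,b).\] Let $\alpha=\gamma^{1/p}$ and $\beta=\delta^{1/p}$. Then the $\ell^p$ edit distance $D$ on $\Sigma^*$ extending $d$, $\alpha$ and $\beta$ is a separating quasi-metric on $\Sigma^*$.
   Context: $\Sigma^*$ is the free monoid on $\Sigma$ (finite words, operation concatenation, identity the empty word $e$), and $\Sigma^+=\Sigma^*\setminus\{e\}$. For $w=w_1\cdots w_n$ ($w_i\in\Sigma$) write $|w|=n$, $\bar w_k=w_1\cdots w_k$ and $\bar w_0=e$. A quasi-metric on a set $X$ is a map $q:X\times X\to\mathbb{R}_{\ge0}$ with $q(x,y)=q(y,x)=0\iff x=y$ and $q(x,z)\le q(x,y)+q(y,z)$; it is separating if $q(x,y)=0$ implies $x=y$. A gap penalty over $\Sigma^+$ is a positive function $\gamma:\Sigma^+\to\mathbb{R}$ with $\gamma(u)+\gamma(v)\ge\gamma(uv)$ for all $u,v\in\Sigma^+$; $\Gamma(\Sigma)$ denotes the set of these. A function $\gamma$ is increasing if $\gamma(uxv)\ge\gamma(uv)$ for all $u,v,x\in\Sigma^*$. A composition-length gap penalty is an increasing $\gamma\in\Gamma(\Sigma)$ of the form $\gamma(z)=\sum_i\phi(z_i)+\psi(|z|)$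 for all $z\in\Sigma^+$, for some $\phi:\Sigma\to\mathbb{R}$ and $\psi:\mathbb{N}\to\mathbb{R}$; $\Gamma_{\mathrm{CL}}(\Sigma)$ denotes the set of these. $\ell^p$ edit distance: given $d:\Sigma\times\Sigma\to\mathbb{R}$, $1\le p<\infty$, and $\alpha,\beta:\Sigma^+\to\mathbb{R}$ with $\alpha^p,\beta^p\in\Gamma(\Sigma)$, for $x,y\in\Sigma^*$ with $m=|x|$, $n=|y|$ define recursively $D(e,e)=0$, $D(e,\bar y_j)=\alpha(\bar y_j)$ ($1\le j\le n$), $D(\bar x_i,e)=\beta(\bar x_i)$ ($1\le i\le m$), and for $1\le i\le m$, $1\le j\le n$, \[D(\bar x_i,\bar y_j)=\Big(\min\Big\{D^p(\bar x_{i-1},\bar y_{j-1})+d^p(x_i,y_j),\ \min_{1\le k\le j}\{D^p(\bar x_i,\bar y_{j-k})+\alpha^p(y_{j-k+1}\cdots y_j)\},\ \min_{1\le k\le i}\{D^p(\bar x_{i-k},\bar y_j)+\beta^p(x_{i-k+1}\cdots x_i)\}\Big\}\Big)^{1/p},\] and set $D(x,y)=D(\bar x_m,\bar y_n)$. *)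

(* Defs.v *)
From HB Require Import structures.
From mathcomp Require Import all_boot all_order all_algebra.
From mathcomp Require Import all_classical all_reals exp.
Set Implicit Arguments. Unset Strict Implicit. Unset Printing Implicit Defensive.
Import Order.TTheory GRing.Theory Num.Theory.
Local Open Scope ring_scope.

Section Defs.
Variable R : realType.

Definition quasi_metric (X : Type) (q : X -> X -> R) : Prop :=
  (forall x y, 0 <= q x y) /\
  (forall x y, (q x y = 0 /\ q y x = 0) <-> x = y) /\
  (forall x y z, q x z <= q x y + q y z).

Definition separating (X : Type) (q : X -> X -> R) : Prop :=
  forall x y, q x y = 0 -> x = y.

Variable S : Type.

Definition gap_penalty (g : seq S -> R) : Prop :=
  (forall z, z <> [::] -> 0 < g z) /\
  (forall u v, u <> [::] -> v <> [::] -> g (u ++ v) <= g u + g v).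

(* increasing (only meaningful when u v is nonempty, g being defined on S^+) *)
Definition increasing_gp (g : seq S -> R) : Prop :=
  forall u x v, u ++ v <> [::] -> g (u ++ v) <= g (u ++ x ++ v).

Definition CL_gap_penalty (g : seq S -> R) : Prop :=
  gap_penalty g /\ increasing_gp g /\
  exists (phi : S -> R) (psi : nat -> R),
    forall z, z <> [::] -> g z = \sum_(a <- z) phi a + psi (size z).

(* l^p edit distance.  [Dfuel n u v] computes D(u, v) (u, v playing the role
   of the prefixes x_i, y_j), by the recursion of the paper; the fuel n only
   has to be at least |u| + |v|. *)
Fixpoint Dfuel (p : R) (d : S -> S -> R) (alpha beta : seq S -> R)
    (n : nat) (u v : seq S) {struct n} : R :=
  match n with
  | 0 => 0
  | n'.+1 =>
    match rev u, rev v with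
    | [::], [::] => 0
    | [::], _ => alpha v
    | _, [::] => beta u
    | a :: ru', b :: rv' =>
      let diag := Dfuel p d alpha beta n' (rev ru') (rev rv') `^ p + d a b `^ p in
      let ins := \big[Order.min/diag]_(1 <= k < (size v).+1)
          (Dfuel p d alpha beta n' u (take (size v - k) v) `^ p
             + alpha (drop (size v - k) v) `^ p) in
      let del := \big[Order.min/diag]_(1 <= k < (size u).+1)
          (Dfuel p d alpha beta n' (take (size u - k) u) v `^ p
             + beta (drop (size u - k) u) `^ p) in
      (Order.min diag (Order.min ins del)) `^ p^-1
    end
  end.

Definition edit_dist (p : R) (d : S -> S -> R) (alpha beta : seq S -> R)
    (x y : seq S) : R :=
  Dfuel p d alpha beta (size x + size y) x y.

End Defs.

(* Main.v *)
Require Import Defs.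
From HB Require Import structures.
From mathcomp Require Import all_boot all_order all_algebra.
From mathcomp Require Import all_classical all_reals exp hoelder.
From mathcomp Require Import zify lra.
Import Order.TTheory GRing.Theory Num.Theory.
Local Open Scope ring_scope.

Set Implicit Arguments. Unset Strict Implicit. Unset Printing Implicit Defensive.

Section Mink.
Variable R : realType.


Lemma mink2 (p a1 a2 b1 b2 : R) : 1 <= p -> 0 <= a1 -> 0 <= a2 -> 0 <= b1 -> 0 <= b2 ->
  ((a1 + b1) `^ p + (a2 + b2) `^ p) `^ p^-1 <=
  (a1 `^ p + a2 `^ p) `^ p^-1 + (b1 `^ p + b2 `^ p) `^ p^-1.
Proof.
move=> p1 ha1 ha2 hb1 hb2.
have p0 : 0 < p by apply: lt_le_trans p1.
have [->|pn1] := eqVneq p 1.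
  by rewrite invr1 !powRr1 ?addr_ge0 // addrACA.
have {pn1} p1' : 1 < p by rewrite lt_neqAle eq_sym pn1.
set S := (a1 + b1) `^ p + (a2 + b2) `^ p.
have S0 : 0 <= S by rewrite addr_ge0 ?powR_ge0.
have [->|Sn0] := eqVneq S 0.
  by rewrite powR0 ?invr_eq0 ?gt_eqF // addr_ge0 ?powR_ge0.
have Sp : 0 < S by rewrite lt_neqAle eq_sym Sn0.
pose q := p / (p - 1).
have pm0 : 0 < p - 1 by rewrite subr_gt0.
have q0 : 0 < q by rewrite divr_gt0.
have pq1 : p^-1 + q^-1 = 1.
  by rewrite /q invf_div -{1}(div1r p) -mulrDl subrKC mulfV// gt_eqF.
pose c1 := (a1 + b1) `^ (p - 1). pose c2 := (a2 + b2) `^ (p - 1).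
have cq : forall x, 0 <= x -> (x `^ (p - 1)) `^ q = x `^ p.
  move=> x hx; rewrite -powRrM /q mulrCA mulfV ?gt_eqF // mulr1 //.
have HS : S = (a1 * c1 + a2 * c2) + (b1 * c1 + b2 * c2).
  rewrite /S /c1 /c2 -(@mulr_powRB1 _ (a1 + b1)) ?addr_ge0 //.
  rewrite -(@mulr_powRB1 _ (a2 + b2)) ?addr_ge0 //.
  by rewrite !mulrDl addrACA.
have Hc : (c1 `^ q + c2 `^ q) `^ q^-1 = S `^ q^-1.
  by rewrite /c1 /c2 !cq ?addr_ge0.
have H1 := hoelder2 ha1 ha2 (powR_ge0 (a1+b1) (p-1)) (powR_ge0 (a2+b2) (p-1)) p0 q0 pq1.
have H2 := hoelder2 hb1 hb2 (powR_ge0 (a1+b1) (p-1)) (powR_ge0 (a2+b2) (p-1)) p0 q0 pq1.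
rewrite -/c1 -/c2 Hc in H1 H2.
have Hq : 0 < S `^ q^-1 by rewrite powR_gt0.
have : S `^ p^-1 * S `^ q^-1 <= ((a1 `^ p + a2 `^ p) `^ p^-1 + (b1 `^ p + b2 `^ p) `^ p^-1) * S `^ q^-1.
  rewrite -powRD; last by rewrite pq1 oner_eq0.
  rewrite pq1 powRr1 //; rewrite [X in X <= _]HS mulrDl; exact: lerD H1 H2.
by rewrite ler_pM2r.
Qed.
Lemma powK (p t : R) : 0 < p -> 0 <= t -> (t `^ p^-1) `^ p = t.
Proof. by move=> p0 t0; rewrite -powRrM mulVf ?gt_eqF // powRr1. Qed.

Lemma powK' (p t : R) : 0 < p -> 0 <= t -> (t `^ p) `^ p^-1 = t.
Proof. by move=> p0 t0; rewrite -powRrM mulfV ?gt_eqF // powRr1. Qed.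

Lemma powle (p x y : R) : 0 < p -> 0 <= x -> 0 <= y -> (x `^ p <= y `^ p) = (x <= y).
Proof.
move=> p0 x0 y0; apply/idP/idP => h; last by apply: ge0_ler_powR => //; exact: ltW.
rewrite -(powK' p0 x0) -(powK' p0 y0); apply: ge0_ler_powR => //.
  by rewrite invr_ge0 ltW.
all: by rewrite nnegrE powR_ge0.
Qed.

Lemma match_ineq (p A B a b X Y Z : R) : 1 <= p ->
  0 <= A -> 0 <= B -> 0 <= a -> 0 <= b -> 0 <= X -> 0 <= Y -> 0 <= Z ->
  X `^ p = A `^ p + a `^ p -> Y `^ p = B `^ p + b `^ p ->
  Z `^ p <= (A + B) `^ p + (a + b) `^ p -> Z <= X + Y.
Proof.
move=> p1 hA hB ha hb hX hY hZ eX eY hz.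
have p0 : 0 < p by apply: lt_le_trans p1.
rewrite -(powK' p0 hZ) -(powK' p0 hX) -(powK' p0 hY) eX eY.
apply: le_trans (mink2 p1 hA ha hB hb).
apply: ge0_ler_powR => //; first by rewrite invr_ge0 ltW.
all: by rewrite nnegrE ?powR_ge0 ?addr_ge0 ?powR_ge0.
Qed.

Lemma superadd (p a b : R) : 1 <= p -> 0 <= a -> 0 <= b ->
  a `^ p + b `^ p <= (a + b) `^ p.
Proof.
move=> p1 ha hb.
have p0 : 0 < p by apply: lt_le_trans p1.
have z : (0:R) `^ p = 0 by rewrite powR0 // gt_eqF.
have := mink2 p1 ha (lexx 0) (lexx 0) hb.
rewrite !addr0 !add0r z addr0 add0r (powK' p0 ha) (powK' p0 hb) => h.
have ip : 0 < p^-1 by rewrite invr_gt0.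
rewrite -(powle ip) ?addr_ge0 ?powR_ge0 //.
by rewrite (powK' p0 (addr_ge0 ha hb)).
Qed.

Lemma key_ineq (p A B X Y Z : R) : 1 <= p ->
  0 <= A -> 0 <= B -> A <= X -> B <= Y -> 0 <= Z ->
  Z `^ p <= (A + B) `^ p + (X `^ p - A `^ p) + (Y `^ p - B `^ p) -> Z <= X + Y.
Proof.
move=> p1 hA hB hAX hBY hZ hz.
have p0 : 0 < p by apply: lt_le_trans p1.
have hX : 0 <= X by apply: le_trans hAX.
have hY : 0 <= Y by apply: le_trans hBY.
have mX : 0 <= X `^ p - A `^ p by rewrite subr_ge0 powle.
have mY : 0 <= Y `^ p - B `^ p by rewrite subr_ge0 powle.
pose a := (X `^ p - A `^ p) `^ p^-1. pose b := (Y `^ p - B `^ p) `^ p^-1.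
have ha : 0 <= a := powR_ge0 _ _. have hb : 0 <= b := powR_ge0 _ _.
have ea : a `^ p = X `^ p - A `^ p by rewrite powK.
have eb : b `^ p = Y `^ p - B `^ p by rewrite powK.
apply: (match_ineq p1 hA hB ha hb hX hY hZ).
- by rewrite ea addrC subrK.
- by rewrite eb addrC subrK.
- apply: le_trans hz _; rewrite -addrA lerD2l -ea -eb; exact: superadd.
Qed.
End Mink.

Unset Implicit Arguments.

Section BigMin.
Variable R : realType.
Lemma bmin_le_idx (I : Type) (r : seq I) (F : I -> R) x0 :
  \big[Order.min/x0]_(i <- r) F i <= x0.
Proof. elim: r => [|i r IH]; rewrite ?big_nil ?big_cons //. by rewrite ge_min IH orbT. Qed.

Lemma bmin_le (r : seq nat) (F : nat -> R) x0 i : i \in r ->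
  \big[Order.min/x0]_(j <- r) F j <= F i.
Proof.
elim: r => [|j r IH] //; rewrite in_cons big_cons => /orP[/eqP->|/IH h].
  by rewrite ge_min lexx.
by rewrite ge_min h orbT.
Qed.

Lemma bmin_att (r : seq nat) (F : nat -> R) x0 :
  \big[Order.min/x0]_(j <- r) F j = x0 \/
  exists2 i, i \in r & \big[Order.min/x0]_(j <- r) F j = F i.
Proof.
elim: r => [|j r IH]; rewrite ?big_nil ?big_cons; first by left.
rewrite minEle; case: ifP => _; first by right; exists j; rewrite ?mem_head.
case: IH => [->|[i ir ->]]; first by left.
by right; exists i => //; rewrite in_cons ir orbT.
Qed.
End BigMin.

Section Fuel.
Variables (R : realType) (S : Type) (p : R) (d : S -> S -> R) (alpha beta : seq S -> R).
Local Notation Df := (Dfuel p d alpha beta).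

Lemma Dfuel_eq n m u v : (size u + size v <= n)%N -> (size u + size v <= m)%N ->
  Df n u v = Df m u v.
Proof.
elim: n m u v => [|n IH] [|m] u v /= Hn Hm.
- by [].
- have : size u = 0%N by lia. have : size v = 0%N by lia.
  by move=> /size0nil -> /size0nil ->.
- have : size u = 0%N by lia. have : size v = 0%N by lia.
  by move=> /size0nil -> /size0nil ->.
case Eu: (rev u) => [|a ru']; case Ev: (rev v) => [|b rv']; [by []|by []|by []|].
have hu : size u = (size ru').+1 by rewrite -size_rev Eu.
have hv : size v = (size rv').+1 by rewrite -size_rev Ev.
have Hd : Df n (rev ru') (rev rv') = Df m (rev ru') (rev rv').
  by apply: IH; rewrite !size_rev; lia.
rewrite Hd; congr (Order.min _ (Order.min _ _) `^ _).
  apply: eq_big_nat => k /andP[k1 k2]; congr (_ `^ _ + _).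
  by apply: IH; rewrite size_takel ?leq_subr //; lia.
apply: eq_big_nat => k /andP[k1 k2]; congr (_ `^ _ + _).
by apply: IH; rewrite size_takel ?leq_subr //; lia.
Qed.

Local Notation D := (edit_dist p d alpha beta).

Lemma D_nil : D [::] [::] = 0. Proof. by []. Qed.
Lemma D_nill v : v <> [::] -> D [::] v = alpha v.
Proof.
case/lastP: v => [//|v b] _; rewrite /edit_dist size_rcons add0n /= rev_rcons.
by case: (rev v).
Qed.
Lemma D_nilr u : u <> [::] -> D u [::] = beta u.
Proof.
case/lastP: u => [//|u a] _; rewrite /edit_dist size_rcons addn0 /= rev_rcons //.
Qed.

Lemma D_rcons u a v b : D (rcons u a) (rcons v b) =
  let diag := D u v `^ p + d a b `^ p in
  (Order.min diag (Order.min
     (\big[Order.min/diag]_(1 <= k < (size v).+2)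
        (D (rcons u a) (take ((size v).+1 - k) (rcons v b)) `^ p
          + alpha (drop ((size v).+1 - k) (rcons v b)) `^ p))
     (\big[Order.min/diag]_(1 <= k < (size u).+2)
        (D (take ((size u).+1 - k) (rcons u a)) (rcons v b) `^ p
          + beta (drop ((size u).+1 - k) (rcons u a)) `^ p)))) `^ p^-1.
Proof.
rewrite {1}/edit_dist !size_rcons addSn [X in X = _]/= !rev_rcons !revK size_rcons.
have Hd : Df (size u + (size v).+1) u v = edit_dist p d alpha beta u v.
  by rewrite /edit_dist; apply: Dfuel_eq; lia.
rewrite Hd; congr (Order.min _ (Order.min _ _) `^ _).
all: rewrite ?size_rcons; apply: eq_big_nat => k /andP[k1 k2].
all: congr (_ `^ _ + _); rewrite /edit_dist; apply: Dfuel_eq;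
    rewrite ?size_rcons ?size_takel ?size_rcons ?leq_subr //; lia.
Qed.

End Fuel.

Lemma Dfuel_sym (R : realType) (S : Type) (p : R) (d : S -> S -> R) (alpha beta : seq S -> R) n u v :
  Dfuel p d alpha beta n u v = Dfuel p (fun a b => d b a) beta alpha n v u.
Proof.
elim: n u v => [|n IH] u v /=; first by [].
case: (rev u) => [|a ru']; case: (rev v) => [|b rv']; [by []|by []|by []|].
rewrite IH; congr (Order.min _ _ `^ _); rewrite minC; congr Order.min.
  by apply: eq_big_nat => k _; rewrite IH.
by apply: eq_big_nat => k _; rewrite IH.
Qed.

Lemma D_sym (R : realType) (S : Type) (p : R) (d : S -> S -> R) (alpha beta : seq S -> R) u v :
  edit_dist p d alpha beta u v = edit_dist p (fun a b => d b a) beta alpha v u.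
Proof. by rewrite /edit_dist Dfuel_sym addnC. Qed.

Set Implicit Arguments.

Lemma bmin_ge (R : realType) (r : seq nat) (F : nat -> R) x0 c :
  (forall i, c <= F i) -> c <= x0 -> c <= \big[Order.min/x0]_(j <- r) F j.
Proof.
move=> hF h0; elim: r => [|j r IH]; rewrite ?big_nil ?big_cons //.
by rewrite le_min hF IH.
Qed.

Lemma bmin_leP (R : realType) (r : seq nat) (F : nat -> R) x0 i c :
  i \in r -> F i <= c -> \big[Order.min/x0]_(j <- r) F j <= c.
Proof. by move=> ir h; apply: le_trans h; apply: bmin_le. Qed.

Lemma cat_split (T : Type) (a b c e : seq T) : a ++ b = c ++ e -> (size b <= size e)%N ->
  exists w, a = c ++ w /\ e = w ++ b.
Proof.
elim: c a => [|x c IH] a /=; first by move=> <- _; exists a.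
case: a => [|y a] /=.
  by move=> -> /=; rewrite size_cat; lia.
by case=> hxy hab hs; have [w [h1 h2]] := IH a hab hs; exists w; rewrite hxy h1 h2.
Qed.

Lemma rcons_inj2 (T : Type) (s t : seq T) x y : rcons s x = rcons t y -> s = t /\ x = y.
Proof. by move=> /(f_equal rev); rewrite !rev_rcons => -[-> /(f_equal rev)]; rewrite !revK. Qed.

Definition psi0 (R : realType) (psi : nat -> R) (j : nat) := if j is 0 then 0 else psi j.
Definition g0 (R : realType) (S : Type) (g : seq S -> R) (w : seq S) := if w is [::] then 0 else g w.

Section Gen.
Variables (R : realType) (S : Type) (p : R) (d : S -> S -> R) (gamma delta : seq S -> R).
Hypothesis p1 : 1 <= p.
Hypothesis d0 : forall a b, 0 <= d a b.
Hypothesis gpos : forall z, z <> [::] -> 0 < gamma z.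
Hypothesis dpos : forall z, z <> [::] -> 0 < delta z.
Hypothesis gsub : forall u v, u <> [::] -> v <> [::] -> gamma (u ++ v) <= gamma u + gamma v.
Hypothesis dsub : forall u v, u <> [::] -> v <> [::] -> delta (u ++ v) <= delta u + delta v.

Let p0 : 0 < p. Proof. exact: lt_le_trans p1. Qed.

Definition al := fun z => gamma z `^ p^-1.
Definition be := fun z => delta z `^ p^-1.
Definition DD := edit_dist p d al be.
Definition EE u v := DD u v `^ p.

Lemma al_p z : z <> [::] -> al z `^ p = gamma z.
Proof. by move=> /gpos/ltW h; rewrite /al powK. Qed.
Lemma be_p z : z <> [::] -> be z `^ p = delta z.
Proof. by move=> /dpos/ltW h; rewrite /be powK. Qed.

Lemma DD_ge0 u v : 0 <= DD u v.
Proof.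
case/lastP: u => [|u a]; case/lastP: v => [|v b].
- by rewrite /DD D_nil.
- by rewrite /DD D_nill ?powR_ge0 //; case: v.
- by rewrite /DD D_nilr ?powR_ge0 //; case: u.
by rewrite /DD D_rcons powR_ge0.
Qed.

Lemma EE_ge0 u v : 0 <= EE u v. Proof. exact: powR_ge0. Qed.

Lemma EE_nil : EE [::] [::] = 0.
Proof. by rewrite /EE /DD D_nil powR0 // gt_eqF. Qed.
Lemma EE_nill v : v <> [::] -> EE [::] v = gamma v.
Proof. by move=> h; rewrite /EE /DD D_nill // al_p. Qed.
Lemma EE_nilr u : u <> [::] -> EE u [::] = delta u.
Proof. by move=> h; rewrite /EE /DD D_nilr // be_p. Qed.

Lemma DD_EE u v : DD u v = (EE u v) `^ p^-1.
Proof. by rewrite /EE powK' // DD_ge0. Qed.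

Definition Mdiag u a v b := EE u v + d a b `^ p.
Definition Mins u a v b := \big[Order.min/Mdiag u a v b]_(1 <= k < (size v).+2)
        (EE (rcons u a) (take ((size v).+1 - k) (rcons v b))
          + al (drop ((size v).+1 - k) (rcons v b)) `^ p).
Definition Mdel u a v b := \big[Order.min/Mdiag u a v b]_(1 <= k < (size u).+2)
        (EE (take ((size u).+1 - k) (rcons u a)) (rcons v b)
          + be (drop ((size u).+1 - k) (rcons u a)) `^ p).

Lemma EE_rcons u a v b : EE (rcons u a) (rcons v b) =
  Order.min (Mdiag u a v b) (Order.min (Mins u a v b) (Mdel u a v b)).
Proof.
have hd : 0 <= Mdiag u a v b by rewrite addr_ge0 ?powR_ge0.
have hM : 0 <= Order.min (Mdiag u a v b) (Order.min (Mins u a v b) (Mdel u a v b)).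
  rewrite le_min hd le_min /= /Mins /Mdel; apply/andP; split; apply: bmin_ge => // k;
  by rewrite addr_ge0 ?powR_ge0.
rewrite -(powK p0 hM) /EE /DD D_rcons.
reflexivity.
Qed.

Lemma ub_match u a v b : EE (rcons u a) (rcons v b) <= EE u v + d a b `^ p.
Proof. by rewrite EE_rcons ge_min lexx. Qed.

Lemma ub_del u1 u2 v : u2 <> [::] -> EE (u1 ++ u2) v <= EE u1 v + delta u2.
Proof.
move=> hu2.
have hw : u1 ++ u2 <> [::] by case: u1 => //=; case: u2 hu2.
case/lastP: v => [|v b].
  rewrite EE_nilr //; case: u1 hw => [|c u1] hw; first by rewrite EE_nil add0r.
  by rewrite EE_nilr //; apply: dsub.
case/lastP E: (u1 ++ u2) hw => [//|u a] _.
have hs : size (u1 ++ u2) = (size u).+1 by rewrite E size_rcons.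
rewrite EE_rcons ge_min; apply/orP; right; rewrite ge_min; apply/orP; right.
rewrite /Mdel; apply: (@bmin_leP _ _ _ _ (size u2)).
  have : (0 < size u2)%N by case: (u2) hu2.
  move: hs; rewrite mem_index_iota size_cat; lia.
rewrite /=.
by rewrite -E -hs size_cat addnK take_size_cat // drop_size_cat // be_p.
Qed.

Lemma ub_ins u v1 v2 : v2 <> [::] -> EE u (v1 ++ v2) <= EE u v1 + gamma v2.
Proof.
move=> hv2.
have hw : v1 ++ v2 <> [::] by case: v1 => //=; case: v2 hv2.
case/lastP: u => [|u a].
  rewrite EE_nill //; case: v1 hw => [|c v1] hw; first by rewrite EE_nil add0r.
  by rewrite EE_nill //; apply: gsub.
case/lastP E: (v1 ++ v2) hw => [//|v b] _.
have hs : size (v1 ++ v2) = (size v).+1 by rewrite E size_rcons.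
rewrite EE_rcons ge_min; apply/orP; right; rewrite ge_min; apply/orP; left.
rewrite /Mins; apply: (@bmin_leP _ _ _ _ (size v2)).
  have : (0 < size v2)%N by case: (v2) hv2.
  move: hs; rewrite mem_index_iota size_cat; lia.
rewrite /=.
by rewrite -E -hs size_cat addnK take_size_cat // drop_size_cat // al_p.
Qed.

Lemma rcons_neq0 (s : seq S) x : rcons s x <> [::]. Proof. by case: s. Qed.

Lemma drop_neq0 (s : seq S) k : (1 <= k <= size s)%N -> drop (size s - k) s <> [::].
Proof.
move=> hk h; have := size_drop (size s - k) s; rewrite h /=; lia.
Qed.

Lemma step u v : u ++ v <> [::] -> [\/
  (exists u1 u2, [/\ u = u1 ++ u2, u2 <> [::] & EE u v = EE u1 v + delta u2]),
  (exists v1 v2, [/\ v = v1 ++ v2, v2 <> [::] & EE u v = EE u v1 + gamma v2]) |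
  (exists u1 a v1 b, [/\ u = rcons u1 a, v = rcons v1 b & EE u v = EE u1 v1 + d a b `^ p])].
Proof.
case/lastP: u => [|u a]; case/lastP: v => [|v b] // _.
- apply: Or32; exists [::], (rcons v b); split => //; first exact: rcons_neq0.
  by rewrite EE_nil add0r EE_nill //; apply: rcons_neq0.
- apply: Or31; exists [::], (rcons u a); split => //; first exact: rcons_neq0.
  by rewrite EE_nil add0r EE_nilr //; apply: rcons_neq0.
rewrite EE_rcons minEle; case: ifP => _.
  by apply: Or33; exists u, a, v, b.
rewrite minEle /Mins /Mdel; case: ifP => _.
  case: (bmin_att _ (index_iota 1 (size v).+2) (fun k => EE (rcons u a) (take ((size v).+1 - k) (rcons v b))
          + al (drop ((size v).+1 - k) (rcons v b)) `^ p) (Mdiag u a v b)) => [->|[k kin ->]].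
    by apply: Or33; exists u, a, v, b.
  apply: Or32; exists (take ((size v).+1 - k) (rcons v b)), (drop ((size v).+1 - k) (rcons v b)).
  have hd : drop ((size v).+1 - k) (rcons v b) <> [::].
    rewrite -(size_rcons v b); apply: drop_neq0; move: kin; rewrite mem_index_iota size_rcons; lia.
  by split => //; rewrite ?cat_take_drop // al_p.
case: (bmin_att _ (index_iota 1 (size u).+2) (fun k => EE (take ((size u).+1 - k) (rcons u a)) (rcons v b)
          + be (drop ((size u).+1 - k) (rcons u a)) `^ p) (Mdiag u a v b)) => [->|[k kin ->]].
  by apply: Or33; exists u, a, v, b.
apply: Or31; exists (take ((size u).+1 - k) (rcons u a)), (drop ((size u).+1 - k) (rcons u a)).
have hd : drop ((size u).+1 - k) (rcons u a) <> [::].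
  rewrite -(size_rcons u a); apply: drop_neq0; move: kin; rewrite mem_index_iota size_rcons; lia.
by split => //; rewrite ?cat_take_drop // be_p.
Qed.

Section Split.
Variables (phi : S -> R) (psi : nat -> R).
Hypothesis dCL : forall z, z <> [::] -> delta z = \sum_(a <- z) phi a + psi (size z).
Hypothesis dh : forall a b, delta [:: a] - delta [:: b] <= d a b `^ p.
Hypothesis ginc : increasing_gp gamma.
Hypothesis dinc : increasing_gp delta.

Lemma d0CL w : g0 delta w = \sum_(a <- w) phi a + psi0 psi (size w).
Proof. by case: w => [|c w]; rewrite ?big_nil ?addr0 // /g0 dCL. Qed.

Lemma g0_ge0 (g : seq S -> R) w : (forall z, z <> [::] -> 0 < g z) -> 0 <= g0 g w.
Proof. by case: w => [|c w] //= h; apply/ltW/h. Qed.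

Lemma psi0_sub (c : S) j k : psi0 psi (j + k) <= psi0 psi j + psi0 psi k.
Proof.
case: j => [|j]; first by rewrite add0n /= add0r.
case: k => [|k]; first by rewrite addn0 /= addr0.
have := @dsub (nseq j.+1 c) (nseq k.+1 c) ltac:(discriminate) ltac:(discriminate).
rewrite -nseqD !dCL ?size_nseq //.
rewrite nseqD big_cat /= addSn /=; lra.
Qed.

Lemma g0_inc (g : seq S -> R) : (forall z, z <> [::] -> 0 < g z) -> increasing_gp g ->
  forall u x v, g0 g (u ++ v) <= g0 g (u ++ x ++ v).
Proof.
move=> gp gi u x v.
case E: (u ++ v) => [|y w]; first exact: g0_ge0.
have hne : u ++ x ++ v <> [::].
  move=> h0; have := f_equal size h0; have := f_equal size E; rewrite !size_cat /=; lia.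
have h := @gi u x v; rewrite E in h; have {}h := h ltac:(discriminate).
by move: h hne; case: (u ++ x ++ v) => [//|z t] h _.
Qed.

Lemma mask_le u m s0 : g0 delta (u ++ mask m s0) <= g0 delta (u ++ s0).
Proof.
elim: s0 u m => [|c s0 IH] u m; first by rewrite mask0.
case: m => [|[] m] /=.
- by have := g0_inc dpos dinc u (c :: s0) [::]; rewrite !cats0.
- by rewrite -!cat_rcons.
- apply: le_trans (IH u m) _.
  exact: (g0_inc dpos dinc u [:: c] s0).
Qed.

Lemma ub_del0 u1 u2 v : EE (u1 ++ u2) v <= EE u1 v + g0 delta u2.
Proof. by case: u2 => [|c u2]; [rewrite cats0 addr0 | apply: ub_del]. Qed.

Lemma ub_ins0 u v1 v2 : EE u (v1 ++ v2) <= EE u v1 + g0 gamma v2.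
Proof. by case: v2 => [|c v2]; [rewrite cats0 addr0 | apply: ub_ins]. Qed.

Lemma split_inv n x y' s : (size x + size s < n)%N -> s <> [::] ->
  exists x' r m k P, [/\ x = x' ++ r, size m = size s,
    size r = (size (mask m s) + k)%N,
    (forall j, psi0 psi (j + k) <= psi0 psi j + P) /\ EE x' y' <= EE x (y' ++ s) &
    \sum_(a <- r) phi a - \sum_(a <- mask m s) phi a + P <= EE x (y' ++ s) - EE x' y'].
Proof.
elim: n x y' s => [//|n IH] x y' s hn hs.
have hne : x ++ y' ++ s <> [::].
  move=> h0; have := f_equal size h0; rewrite !size_cat; case: (s) hs => //= c s' _; lia.
case: (step hne) => [[x1 [x2 [Ex hx2 eE]]]|[v1 [v2 [Ev hv2 eE]]]|[x1 [a [v1 [b [Ex Ev eE]]]]]].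
-
  have hx2s : (0 < size x2)%N by case: (x2) hx2.
  have [x' [r [m [k [P [Ex1 hm hr [hP hle] hsum]]]]]] : exists x' r m k P,
    [/\ x1 = x' ++ r, size m = size s, size r = (size (mask m s) + k)%N,
    (forall j, psi0 psi (j + k) <= psi0 psi j + P) /\ EE x' y' <= EE x1 (y' ++ s) &
    \sum_(a <- r) phi a - \sum_(a <- mask m s) phi a + P <= EE x1 (y' ++ s) - EE x' y'].
    by apply: IH => //; move: hn; rewrite Ex size_cat; lia.
  exists x', (r ++ x2), m, (k + size x2)%N, (P + psi (size x2)); split; [| | | split | ] => //.
  + by rewrite Ex Ex1 catA.
  + by rewrite size_cat hr; lia.
  + move=> j; case: (x2) hx2 => [//|c x2'] _.
    rewrite addnA; apply: le_trans (psi0_sub c _ _) _.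
    by rewrite /= addrA lerD2r hP.
  + by rewrite eE; apply: le_trans hle _; rewrite lerDl ltW // dpos.
  + rewrite eE big_cat /= dCL //; move: hsum; lra.
-
  have hv2s : (0 < size v2)%N by case: (v2) hv2.
  have hgv2 : 0 < gamma v2 by apply: gpos.
  case: (leqP (size s) (size v2)) => hsv.
  + have [w [Ey' Ev2]] := cat_split Ev hsv.
    exists x, [::], (nseq (size s) false), 0%N, 0; split; [| | | split | ].
    * by rewrite cats0.
    * by rewrite size_nseq.
    * by rewrite mask_false.
    * by move=> j; rewrite addn0 addr0.
    * rewrite eE Ey'; apply: le_trans (ub_ins0 _ _ _) _; rewrite lerD2l.
      case: (w) Ev2 => [|c w'] Ev2; first by rewrite /= ltW.
      have := @ginc (c :: w') s [::]; rewrite !cats0 -Ev2 => /(_ ltac:(discriminate)) //.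
    * rewrite mask_false !big_nil subrr add0r subr_ge0.
      rewrite eE Ey'; apply: le_trans (ub_ins0 _ _ _) _; rewrite lerD2l.
      case: (w) Ev2 => [|c w'] Ev2; first by rewrite /= ltW.
      have := @ginc (c :: w') s [::]; rewrite !cats0 -Ev2 => /(_ ltac:(discriminate)) //.
  + have [s1 [Ev1 Es]] := cat_split (esym Ev) (ltnW hsv).
    have hs1 : s1 <> [::] by move=> h1; move: hsv; rewrite Es h1 /= ltnn.
    have [x' [r [m [k [P [Ex1 hm hr [hP hle] hsum]]]]]] : exists x' r m k P,
      [/\ x = x' ++ r, size m = size s1, size r = (size (mask m s1) + k)%N,
      (forall j, psi0 psi (j + k) <= psi0 psi j + P) /\ EE x' y' <= EE x (y' ++ s1) &
      \sum_(a <- r) phi a - \sum_(a <- mask m s1) phi a + P <= EE x (y' ++ s1) - EE x' y'].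
      by apply: IH => //; move: hn; rewrite Es size_cat; lia.
    have hmask : mask (m ++ nseq (size v2) false) s = mask m s1.
      by rewrite Es mask_cat // mask_false cats0.
    exists x', r, (m ++ nseq (size v2) false), k, P; split; [| | | split | ] => //.
    * by rewrite size_cat size_nseq hm Es size_cat.
    * by rewrite hmask.
    * by rewrite eE Ev1; apply: le_trans hle _; rewrite lerDl ltW.
    * rewrite hmask eE Ev1; apply: le_trans hsum _; rewrite lerD2r lerDl ltW //.
-
  case/lastP Es: s hs => [//|s1 b'] _.
  rewrite Es in eE; rewrite Es -rcons_cat in Ev; have [Ev1 Eb] := rcons_inj2 Ev.
  subst b'.
  case: s1 Es Ev1 Ev eE => [|c s1] Es Ev1 Ev eE.
  + exists x1, [:: a], [:: true], 0%N, 0; split; [| | | split | ] => //.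
    * by rewrite Ex cats1.
    * by move=> j; rewrite addn0 addr0.
    * by rewrite eE -Ev1 cats0 lerDl powR_ge0.
    * rewrite eE -Ev1 cats0 /= !big_seq1.
      have := dh a b; rewrite !dCL // !big_seq1 /=; lra.
  + have [x' [r [m [k [P [Ex1 hm hr [hP hle] hsum]]]]]] : exists x' r m k P,
      [/\ x1 = x' ++ r, size m = size (c :: s1), size r = (size (mask m (c :: s1)) + k)%N,
      (forall j, psi0 psi (j + k) <= psi0 psi j + P) /\ EE x' y' <= EE x1 (y' ++ c :: s1) &
      \sum_(a <- r) phi a - \sum_(a <- mask m (c :: s1)) phi a + P <= EE x1 (y' ++ c :: s1) - EE x' y'].
      by apply: IH => //; move: hn; rewrite Ex Es !size_rcons /=; lia.
    have hmask : mask (rcons m true) (rcons (c :: s1) b) = rcons (mask m (c :: s1)) b.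
      by rewrite -!cats1 mask_cat.
    exists x', (rcons r a), (rcons m true), k, P; split; [| | | split | ] => //.
    * by rewrite Ex Ex1 rcons_cat.
    * by rewrite !size_rcons hm.
    * by rewrite hmask !size_rcons hr.
    * by rewrite eE -Ev1; apply: le_trans hle _; rewrite lerDl powR_ge0.
    * rewrite hmask eE -Ev1 -!cats1 !big_cat /= !big_seq1.
      have := dh a b; rewrite !dCL // !big_seq1 /=; move: hsum; lra.
Qed.

Lemma split_del x y' s : s <> [::] -> exists x' r, [/\ x = x' ++ r,
  EE x' y' <= EE x (y' ++ s) & g0 delta r <= delta s + (EE x (y' ++ s) - EE x' y')].
Proof.
move=> hs.
have [x' [r [m [k [P [Ex hm hr [hP hle] hsum]]]]]] := @split_inv (size x + size s).+1 x y' s (ltnSn _) hs.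
exists x', r; split => //.
rewrite d0CL hr.
apply: (le_trans (y := \sum_(a <- r) phi a + psi0 psi (size (mask m s)) + P)).
  by rewrite -addrA lerD2l hP.
have hmk := mask_le [::] m s; rewrite /= d0CL in hmk.
have : g0 delta s = delta s by case: (s) hs.
move=> hg; rewrite hg in hmk; move: hmk hsum; lra.
Qed.

End Split.

End Gen.

Section Tri.
Variables (R : realType) (S : Type) (p : R) (d : S -> S -> R) (gamma delta : seq S -> R).
Hypothesis p1 : 1 <= p.
Hypothesis d0 : forall a b, 0 <= d a b.
Hypothesis dtri : forall a b c, d a c <= d a b + d b c.
Hypothesis gpos : forall z, z <> [::] -> 0 < gamma z.
Hypothesis dpos : forall z, z <> [::] -> 0 < delta z.
Hypothesis gsub : forall u v, u <> [::] -> v <> [::] -> gamma (u ++ v) <= gamma u + gamma v.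
Hypothesis dsub : forall u v, u <> [::] -> v <> [::] -> delta (u ++ v) <= delta u + delta v.
Hypothesis ginc : increasing_gp gamma.
Hypothesis dinc : increasing_gp delta.
Variables (phig phid : S -> R) (psig psid : nat -> R).
Hypothesis gCL : forall z, z <> [::] -> gamma z = \sum_(a <- z) phig a + psig (size z).
Hypothesis dCL : forall z, z <> [::] -> delta z = \sum_(a <- z) phid a + psid (size z).
Hypothesis gh : forall a b, gamma [:: b] - gamma [:: a] <= d a b `^ p.
Hypothesis dh : forall a b, delta [:: a] - delta [:: b] <= d a b `^ p.

Hypothesis dref : forall a, d a a = 0.
Hypothesis dsep : forall a b, d a b = 0 -> a = b.

Let p0 : 0 < p. Proof. exact: lt_le_trans p1. Qed.

Local Notation D := (DD p d gamma delta).
Local Notation E := (EE p d gamma delta).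

Lemma EE_sym u v : E u v = EE p (fun a b => d b a) delta gamma v u.
Proof. by rewrite /EE /DD D_sym. Qed.

Lemma split_ins y' s z : s <> [::] -> exists z' r, [/\ z = z' ++ r,
  E y' z' <= E (y' ++ s) z & g0 gamma r <= gamma s + (E (y' ++ s) z - E y' z')].
Proof.
move=> hs.
have gh' : forall a b, gamma [:: a] - gamma [:: b] <= (fun a b => d b a) a b `^ p.
  by move=> a b; apply: gh.
have [z' [r [Ez hle hr]]] := split_del p1 dpos gpos dsub gsub gCL gh' dinc ginc z y' hs.
by exists z', r; rewrite !EE_sym; split.
Qed.

Lemma Dle u v u' v' : E u v <= E u' v' -> D u v <= D u' v'.
Proof. by rewrite /EE powle // DD_ge0. Qed.

Lemma Dple A u v : 0 <= A -> D u v <= A -> E u v <= A `^ p.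
Proof. by move=> hA h; rewrite /EE powle // DD_ge0. Qed.

Lemma tri n x y z : (size x + size y + size z < n)%N -> D x z <= D x y + D y z.
Proof.
elim: n x y z => [//|n IH] x y z hn.
have hZ := DD_ge0 p d gamma delta x z.
case Eyz: (y ++ z) => [|c0 w].
  have [-> ->] : y = [::] /\ z = [::] by case: (y) (z) Eyz => [|? ?] [|? ?].
  by rewrite /DD D_nil addr0.
have hyz : y ++ z <> [::] by rewrite Eyz.
case: (step d p1 gpos dpos hyz) => [[y1 [s [Ey hs eE]]]|[z1 [z2 [Ez hz2 eE]]]|[y1 [b [z1 [c [Ey Ez eE]]]]]].
-
  have [x' [r [Ex hle hr]]] := split_del p1 gpos dpos gsub dsub dCL dh ginc dinc x y1 hs.
  rewrite -Ey in hle hr.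
  have IH1 := IH x' y1 z ltac:(move: hn; rewrite Ex Ey !size_cat; case: (s) hs => //= ? ? _; lia).
  apply: (key_ineq (A := D x' y1) (B := D y1 z) p1) => //.
  + exact: DD_ge0.
  + exact: DD_ge0.
  + exact: Dle.
  + by apply: Dle; rewrite eE lerDl ltW // dpos.
  + have h1 := ub_del0 d gamma p1 dpos dsub x' r z; rewrite -Ex in h1.
    have h2 := Dple (addr_ge0 (DD_ge0 _ _ _ _ _ _) (DD_ge0 _ _ _ _ _ _)) IH1.
    rewrite -/(E x z) -/(E x y) -/(E y z) -/(E x' y1) -/(E y1 z) eE.
    move: h1 h2 hr; rewrite /EE; lra.
-
  have IH1 := IH x y z1 ltac:(move: hn; rewrite Ez !size_cat; case: (z2) hz2 => //= ? ? _; lia).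
  apply: (key_ineq (A := D x y) (B := D y z1) p1) => //.
  + exact: DD_ge0.
  + exact: DD_ge0.
  + by apply: Dle; rewrite eE lerDl ltW // gpos.
  + have h1 := ub_ins0 d delta p1 gpos gsub x z1 z2; rewrite -Ez in h1.
    have h2 := Dple (addr_ge0 (DD_ge0 _ _ _ _ _ _) (DD_ge0 _ _ _ _ _ _)) IH1.
    have hg : g0 gamma z2 = gamma z2 by case: (z2) hz2.
    rewrite hg in h1.
    rewrite -/(E x z) -/(E x y) -/(E y z) -/(E y z1) eE.
    move: h1 h2; rewrite /EE; lra.
-
  have hxy : x ++ y <> [::] by rewrite Ey; case: (x) => //; case: (y1).
  case: (step d p1 gpos dpos hxy) => [[x1 [x2 [Ex hx2 eE']]]|[y' [s [Ey' hs eE']]]|[x1 [a [y1' [b' [Ex Ey' eE']]]]]].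
  + have IH1 := IH x1 y z ltac:(move: hn; rewrite Ex !size_cat; case: (x2) hx2 => //= ? ? _; lia).
    apply: (key_ineq (A := D x1 y) (B := D y z) p1) => //.
    * exact: DD_ge0.
    * exact: DD_ge0.
    * by apply: Dle; rewrite eE' lerDl ltW // dpos.
    * have h1 := ub_del0 d gamma p1 dpos dsub x1 x2 z; rewrite -Ex in h1.
      have h2 := Dple (addr_ge0 (DD_ge0 _ _ _ _ _ _) (DD_ge0 _ _ _ _ _ _)) IH1.
      have hg : g0 delta x2 = delta x2 by case: (x2) hx2.
      rewrite hg in h1.
      rewrite -/(E x z) -/(E x y) -/(E y z) -/(E x1 y) eE'.
      move: h1 h2; rewrite /EE; lra.
  + have [z' [r [Ez' hle hr]]] := split_ins y' z hs.
    rewrite -Ey' in hle hr.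
    have IH1 := IH x y' z' ltac:(move: hn; rewrite Ey' Ez' !size_cat; case: (s) hs => //= ? ? _; lia).
    apply: (key_ineq (A := D x y') (B := D y' z') p1) => //.
    * exact: DD_ge0.
    * exact: DD_ge0.
    * by apply: Dle; rewrite eE' lerDl ltW // gpos.
    * exact: Dle.
    * have h1 := ub_ins0 d delta p1 gpos gsub x z' r; rewrite -Ez' in h1.
      have h2 := Dple (addr_ge0 (DD_ge0 _ _ _ _ _ _) (DD_ge0 _ _ _ _ _ _)) IH1.
      rewrite -/(E x z) -/(E x y) -/(E y z) -/(E x y') -/(E y' z') eE'.
      move: h1 h2 hr; rewrite /EE; lra.
  + rewrite Ey in Ey'; have [Ey1 Eb] := rcons_inj2 Ey'; subst y1' b'.
    have IH1 := IH x1 y1 z1 ltac:(move: hn; rewrite Ex Ey Ez !size_rcons; lia).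
    apply: (match_ineq (A := D x1 y1) (B := D y1 z1) (a := d a b) (b := d b c) p1).
    * exact: DD_ge0.
    * exact: DD_ge0.
    * exact: d0.
    * exact: d0.
    * exact: DD_ge0.
    * exact: DD_ge0.
    * exact: DD_ge0.
    * by rewrite -/(E x y) eE'.
    * by rewrite -/(E y z) eE.
    * rewrite -/(E x z) Ex Ez.
      apply: le_trans (ub_match d gamma delta p1 x1 a z1 c) _.
      apply: lerD; first exact: (Dple (addr_ge0 (DD_ge0 _ _ _ _ _ _) (DD_ge0 _ _ _ _ _ _)) IH1).
      by rewrite powle // ?addr_ge0 // dtri.
Qed.

Lemma E0D u v : E u v = 0 -> D u v = 0.
Proof. by move=> h; rewrite DD_EE // h powR0 // invr_neq0 // gt_eqF. Qed.

Lemma Dxx x : D x x = 0.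
Proof.
apply: E0D; apply/eqP; rewrite eq_le EE_ge0 andbT.
elim/last_ind: x => [|x a IH]; first by rewrite EE_nil.
apply: le_trans (ub_match d gamma delta p1 x a x a) _.
by rewrite dref powR0 ?gt_eqF // addr0.
Qed.

Lemma sep n x y : (size x + size y < n)%N -> D x y = 0 -> x = y.
Proof.
elim: n x y => [//|n IH] x y hn hD.
have hE : E x y = 0 by rewrite /EE hD powR0 // gt_eqF.
case Exy: (x ++ y) => [|c0 w].
  by case: (x) (y) Exy => [|? ?] [|? ?].
have hxy : x ++ y <> [::] by rewrite Exy.
case: (step d p1 gpos dpos hxy) => [[x1 [x2 [Ex hx2 eE]]]|[y1 [y2 [Ey hy2 eE]]]|[x1 [a [y1 [b [Ex Ey eE]]]]]].
- exfalso; have h1 := dpos hx2; have h2 := EE_ge0 p d gamma delta x1 y; move: eE; rewrite hE; lra.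
- exfalso; have h1 := gpos hy2; have h2 := EE_ge0 p d gamma delta x y1; move: eE; rewrite hE; lra.
- have h1 := EE_ge0 p d gamma delta x1 y1; have h2 := powR_ge0 (d a b) p.
  have e1 : E x1 y1 = 0 by move: eE; rewrite hE; lra.
  have e2 : d a b `^ p = 0 by move: eE; rewrite hE; lra.
  rewrite Ex Ey (IH x1 y1) ?(dsep (powR_eq0_eq0 e2)) //; last exact: E0D.
  by move: hn; rewrite Ex Ey !size_rcons; lia.
Qed.

Lemma main_sec : quasi_metric (edit_dist p d (fun z => gamma z `^ p^-1) (fun z => delta z `^ p^-1)) /\
  separating (edit_dist p d (fun z => gamma z `^ p^-1) (fun z => delta z `^ p^-1)).
Proof.
have hs : separating (edit_dist p d (fun z => gamma z `^ p^-1) (fun z => delta z `^ p^-1)).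
  by move=> x y; apply: (@sep (size x + size y).+1).
split => //; split; [|split].
- by move=> x y; apply: (DD_ge0 p d gamma delta).
- by move=> x y; split; [case=> /hs | move=> ->; split; apply: Dxx].
- by move=> x y z; apply: (@tri (size x + size y + size z).+1).
Qed.

End Tri.

Theorem theorem3p10 (R : realType) (S : Type) (p : R) (d : S -> S -> R)
    (gamma delta : seq S -> R) :
  1 <= p ->
  quasi_metric d -> separating d ->
  CL_gap_penalty gamma -> CL_gap_penalty delta ->
  (forall a b : S, gamma [:: b] - gamma [:: a] <= d a b `^ p) ->
  (forall a b : S, delta [:: a] - delta [:: b] <= d a b `^ p) ->
  let alpha := fun z => gamma z `^ p^-1 in
  let beta := fun z => delta z `^ p^-1 in
  quasi_metric (edit_dist p d alpha beta) /\
  separating (edit_dist p d alpha beta).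
Proof.
move=> p1 [d0 [deq dtri]] dsep [[gpos gsub] [ginc [phig [psig gCL]]]]
  [[dpos dsub] [dinc [phid [psid dCL]]]] gh dh alpha beta.
have dref : forall a, d a a = 0 by move=> a; have [_ /(_ erefl) []] := deq a a.
exact: (main_sec p1 d0 dtri gpos dpos gsub dsub ginc dinc gCL dCL gh dh dref dsep).
Qed.
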